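(* Let $\Omega$ be a finite set with $n=|\Omega|$, $V_\Omega=\mathbb{R}^\Omega$, and $V_\Upsilon,V_\Gamma\le V_\Omega$. Let $\mathcal{P}$, $\mathcal{Q}$, $\mathcal{R}$ be orthogonal decompositions of $V_\Omega$, $V_\Upsilon$, $V_\Gamma$, respectively, each containing $\mathbf{P}_0=\mathbf{Q}_0=\mathbf{R}_0=n^{-1}\mathbf{J}$, such that $\mathcal{Q}$ and $\mathcal{R}$ are both structure balanced in relation to $\mathcal{P}$. Suppose that either (A) $\mathbf{QPR}=\mathbf{0}$ for all $\mathbf{P}\in\mathcal{P}\setminus\{\mathbf{P}_0\}$, all $\mathbf{Q}\in\mathcal{Q}$ and all $\mathbf{R}\in\mathcal{R}$; or (B) for all $\mathbf{P}\in\mathcal{P}$, $\mathbf{Q}\in\mathcal{Q}$ and $\mathbf{R}\in\mathcal{R}$, if $\mathbf{PQ}$ and $\mathbf{PR}$ are both nonzero then $\mathbf{P}\vartriangleright\mathbf{Q}=\mathbf{P}$ or $\mathbf{P}\vartriangleright\mathbf{R}=\mathbf{P}$. Then the decomposition $\mathcal{P}\vartriangleright\mathcal{Q}$ is compatible with the decomposition $\mathcal{P}\vartriangleright\mathcal{R}$, i.e. $\mathbf{BC}=\mathbf{CB}$ for all $\mathbf{B}\in\mathcal{P}\vartriangleright\mathcal{Q}$ and $\mathbf{C}\in\mathcal{P}\vartriangleright\mathcal{R}$.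
   Context: $\mathbf{J}$ is the $n\times n$ all-ones matrix. $V_\Omega$ carries the standard inner product; all matrices are $\Omega\times\Omega$. An orthogonal decomposition of a subspace $W\le V_\Omega$ is a finite set of nonzero symmetric idempotent matrices that are mutually orthogonal and whose sum is the orthogonal projector onto $W$; zero matrices are discarded from listed decompositions. For projectors $\mathbf{A},\mathbf{B}$: $\mathbf{B}$ has first-order balance in relation to $\mathbf{A}$ if $\mathbf{BAB}=\lambda_{\mathbf{AB}}\mathbf{B}$ for a scalar $\lambda_{\mathbf{AB}}$; $\lambda_{\mathbf{AB}}=0$ iff $\mathbf{AB}=\mathbf{0}$; if $\lambda_{\mathbf{AB}}\ne0$, $\mathbf{A}\vartriangleright\mathbf{B}=\lambda_{\mathbf{AB}}^{-1}\mathbf{ABA}$. $\mathcal{B}$ is structure balanced in relation to $\mathcal{A}$ if every $\mathbf{B}\in\mathcal{B}$ has first-order balance in relation to every $\mathbf{A}\in\mathcal{A}$, and $\mathbf{B}_1\mathbf{A}\mathbf{B}_2=\mathbf{0}$ for all $\mathbf{A}\in\mathcal{A}$ and distinct $\mathbf{B}_1,\mathbf{B}_2\in\mathcal{B}$. Then $\mathbf{A}\vdash\mathcal{B}=\mathbf{A}-\sum'_{\mathbf{B}}\mathbf{A}\vartriangleright\mathbf{B}$ (sum over $\mathbf{B}$ with $\lambda_{\mathbf{AB}}\ne0$) and $\mathcal{A}\vartriangleright\mathcal{B}=\{\mathbf{A}\vartriangleright\mathbf{B}:\mathbf{A}\in\mathcal{A},\mathbf{B}\in\mathcal{B},\lambda_{\mathbf{AB}}\neq0\}\cup\{\mathbf{A}\vdash\mathcal{B}:\mathbf{A}\in\mathcal{A}\}$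 (zeros discarded). *)

(* Defs.v *)
(* Matrices over a real field R, indexed by 'I_n (Omega = 'I_n). *)
From HB Require Import structures.
From mathcomp Require Import all_boot all_order all_algebra.
From Stdlib Require Import ClassicalEpsilon.
Set Implicit Arguments. Unset Strict Implicit. Unset Printing Implicit Defensive.
Import Order.TTheory GRing.Theory Num.Theory.
Local Open Scope ring_scope.

Section Defs.
Variables (R : realFieldType) (n : nat).
Notation M := 'M[R]_n.

Definition avg_proj : M := (n%:R)^-1 *: const_mx 1.

(* E is the orthogonal projector onto the subspace W (= row space of W) *)
Definition orth_proj (E W : M) : Prop :=
  E^T = E /\ E *m E = E /\ (E == W)%MS.

Definition orth_decomp (s : seq M) (W : M) : Prop :=
  [/\ uniq s,
      (forall E, E \in s -> E != 0 /\ E^T = E /\ E *m E = E),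
      (forall E F, E \in s -> F \in s -> E != F -> E *m F = 0)
    & orth_proj (\sum_(E <- s) E) W].

Definition fo_balance (A B : M) : Prop :=
  exists l : R, B *m A *m B = l *: B.

Definition lam (A B : M) : R :=
  epsilon (inhabits (0 : R)) (fun l => B *m A *m B = l *: B).

Definition tri (A B : M) : M := (lam A B)^-1 *: (A *m B *m A).

Definition struct_balanced (Bs As : seq M) : Prop :=
  (forall A B, A \in As -> B \in Bs -> fo_balance A B) /\
  (forall A B1 B2, A \in As -> B1 \in Bs -> B2 \in Bs -> B1 != B2 ->
     B1 *m A *m B2 = 0).

Definition turnstile (A : M) (Bs : seq M) : M :=
  A - \sum_(B <- Bs | lam A B != 0) tri A B.

Definition decomp_tri (As Bs : seq M) : seq M :=
  [seq X <- [seq tri A B | A <- As, B <- [seq B <- Bs | lam A B != 0]]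
            ++ [seq turnstile A Bs | A <- As] | X != 0].

End Defs.

(* Main.v *)
Require Import Defs.
From mathcomp Require Import all_boot all_order all_algebra.
Import GRing.Theory Num.Theory.
Local Open Scope ring_scope.
Set Implicit Arguments. Unset Strict Implicit.

Section Helpers.
Variables (R : realFieldType) (n : nat).
Notation M := 'M[R]_n.

Definition cm (X Y : M) := X *m Y = Y *m X.

Lemma cm_sym X Y : cm X Y -> cm Y X. Proof. by []. Qed.

Lemma cm_sub X Y Z : cm X Y -> cm X Z -> cm X (Y - Z).
Proof. by rewrite /cm mulmxBl mulmxBr => -> ->. Qed.

Lemma cm_scale X Y c : cm X Y -> cm X (c *: Y).
Proof. by rewrite /cm -scalemxAl -scalemxAr => ->. Qed.

Lemma cm_sum (I : eqType) X (r : seq I) (p : pred I) (F : I -> M) :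
  (forall i, i \in r -> cm X (F i)) -> cm X (\sum_(i <- r | p i) F i).
Proof.
move=> H; rewrite big_seq_cond; apply: (big_ind (cm X)).
- by rewrite /cm mulmx0 mul0mx.
- by move=> a b; rewrite /cm mulmxDl mulmxDr => -> ->.
- by move=> i /andP[/H].
Qed.

Definition elt (P : M) (Qs : seq M) (B : M) :=
  (exists2 Q, Q \in Qs & B = tri P Q) \/ B = turnstile P Qs.

Lemma mem_decomp Ps Qs B : B \in decomp_tri Ps Qs ->
  exists2 P, P \in Ps & elt P Qs B.
Proof.
rewrite mem_filter => /andP[_]; rewrite mem_cat => /orP[].
- move=> /allpairsPdep[P [Q [HP HQ ->]]]; exists P => //; left; exists Q => //.
  by move: HQ; rewrite mem_filter => /andP[].
- by move=> /mapP[P HP ->]; exists P => //; right.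
Qed.

Lemma tri_absorb (P Q : M) : P *m P = P ->
  P *m tri P Q = tri P Q /\ tri P Q *m P = tri P Q.
Proof.
move=> PP; rewrite /tri -scalemxAr -scalemxAl !mulmxA PP -!mulmxA PP.
by [].
Qed.

Lemma elt_absorb (P : M) Qs B : P *m P = P -> elt P Qs B ->
  P *m B = B /\ B *m P = B.
Proof.
move=> PP [[Q _ ->]|->]; first exact: tri_absorb.
rewrite /turnstile mulmxBl mulmxBr mulmx_suml mulmx_sumr PP; split.
- by congr (_ - _); apply: eq_bigr => Q _; case: (tri_absorb Q PP).
- by congr (_ - _); apply: eq_bigr => Q _; case: (tri_absorb Q PP).
Qed.

Lemma cm_P_tri (P Q : M) : P *m P = P -> cm P (tri P Q).
Proof. by move=> PP; rewrite /cm; case: (tri_absorb Q PP) => -> ->. Qed.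

Lemma cm_P_elt (P : M) Qs B : P *m P = P -> elt P Qs B -> cm P B.
Proof. by move=> PP E; rewrite /cm; case: (elt_absorb PP E) => -> ->. Qed.

Lemma avg_rank1 (X : M) : exists c : R,
  avg_proj R n *m X *m avg_proj R n = c *: avg_proj R n.
Proof.
have HJ : const_mx 1 *m X *m const_mx 1 = (\sum_i \sum_j X i j) *: (const_mx 1 : M).
  apply/matrixP => a b; rewrite !mxE mulr1.
  rewrite (eq_bigr (fun k => \sum_i X i k)); first by rewrite exchange_big.
  by move=> k _; rewrite !mxE mulr1; apply: eq_bigr => i _; rewrite !mxE mul1r.
exists ((n%:R)^-1 * \sum_i \sum_j X i j).
rewrite /avg_proj -scalemxAl -scalemxAr -scalemxAl HJ !scalerA; congr (_ *: _).
by rewrite -!mulrA [_ / _]mulrC.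
Qed.

End Helpers.

Theorem theorem3 (R : realFieldType) (n : nat)
  (Ups Gam : 'M[R]_n) (Ps Qs Rs : seq 'M[R]_n) :
  orth_decomp Ps 1%:M ->
  orth_decomp Qs Ups ->
  orth_decomp Rs Gam ->
  avg_proj R n \in Ps ->
  avg_proj R n \in Qs ->
  avg_proj R n \in Rs ->
  struct_balanced Qs Ps ->
  struct_balanced Rs Ps ->
  ((forall P Q S, P \in Ps -> P != avg_proj R n -> Q \in Qs -> S \in Rs ->
      Q *m P *m S = 0)
   \/
   (forall P Q S, P \in Ps -> Q \in Qs -> S \in Rs ->
      P *m Q != 0 -> P *m S != 0 -> tri P Q = P \/ tri P S = P)) ->
  forall B C, B \in decomp_tri Ps Qs -> C \in decomp_tri Ps Rs ->
    B *m C = C *m B.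
Proof.
move=> [_ HPs HPo _] [_ HQs _ _] [_ HRs _ _] _ _ _ _ _ Hcase B C HB HC.
have core : forall P Q S, P \in Ps -> Q \in Qs -> S \in Rs ->
    cm (P *m Q *m P) (P *m S *m P).
  move=> P Q S HP HQ HS.
  have [P0 [PT PP]] := HPs P HP.
  case: Hcase => [HA|HB'].
  - case: (eqVneq P (avg_proj R n)) => [->|Pne].
      have [c1 ->] := avg_rank1 Q; have [c2 ->] := avg_rank1 S.
      by rewrite /cm -!scalemxAl -!scalemxAr !scalerA mulrC.
    have H1 := HA P Q S HP Pne HQ HS.
    have H2 : S *m P *m Q = 0.
      have [_ [QT _]] := HQs Q HQ; have [_ [ST _]] := HRs S HS.
      by rewrite -QT -ST -PT -!trmx_mul mulmxA H1 trmx0.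
    have E1 : P *m Q *m P *m (P *m S *m P) = P *m (Q *m P *m S) *m P.
      by rewrite !mulmxA -(mulmxA _ P P) PP.
    have E2 : P *m S *m P *m (P *m Q *m P) = P *m (S *m P *m Q) *m P.
      by rewrite !mulmxA -(mulmxA _ P P) PP.
    by rewrite /cm E1 E2 H1 H2 mulmx0 mul0mx.
  - have cmP : forall X, cm P (P *m X *m P).
      by move=> X; rewrite /cm !mulmxA PP -(mulmxA _ P P) PP.
    have key : forall Y, tri P Y = P -> exists c, P *m Y *m P = c *: P.
      move=> Y Ht; exists (lam P Y).
      case: (eqVneq (lam P Y) 0) => [l0|lne].
        by move: P0; rewrite -Ht /tri l0 invr0 scale0r eqxx.
      have : lam P Y *: tri P Y = lam P Y *: P by rewrite Ht.
      by rewrite /tri scalerA mulfV // scale1r.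
    case: (eqVneq (P *m Q) 0) => [PQ0|PQ].
      by rewrite /cm PQ0 !mul0mx mulmx0.
    case: (eqVneq (P *m S) 0) => [PS0|PS].
      by rewrite /cm PS0 !mul0mx mulmx0.
    case: (HB' P Q S HP HQ HS PQ PS) => /key [c ->].
      by apply: cm_sym; apply: cm_scale; apply: cm_sym; apply: cmP.
    by apply: cm_scale; apply: cm_sym; apply: cmP.
have [P1 HP1 EB] := mem_decomp HB.
have [P2 HP2 EC] := mem_decomp HC.
have [_ [_ PP1]] := HPs P1 HP1.
have [_ [_ PP2]] := HPs P2 HP2.
have [B1 B2] := elt_absorb PP1 EB.
have [C1 C2] := elt_absorb PP2 EC.
case: (eqVneq P1 P2) => [E12|N12]; last first.
  have L : B *m C = 0.
    by rewrite -B2 -C1 -mulmxA (mulmxA P1) (HPo _ _ HP1 HP2 N12) mul0mx mulmx0.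
  have L' : C *m B = 0.
    rewrite -C2 -B1 -mulmxA (mulmxA P2) (HPo _ _ HP2 HP1) ?mul0mx ?mulmx0 //.
    by rewrite eq_sym.
  by rewrite L L'.
subst P2.
have tt : forall Q S, Q \in Qs -> S \in Rs -> cm (tri P1 Q) (tri P1 S).
  move=> Q S HQ HS; apply: cm_scale; apply: cm_sym; apply: cm_scale.
  by apply: cm_sym; apply: core.
have BS : forall S, S \in Rs -> cm B (tri P1 S).
  move=> S HS; case: EB => [[Q HQ ->]|->]; first exact: tt.
  apply: cm_sym; rewrite /turnstile; apply: cm_sub.
    by apply: cm_sym; apply: cm_P_tri.
  by apply: cm_sum => Q HQ; apply: cm_sym; apply: tt.
change (cm B C).
case: EC => [[S HS ->]|->]; first exact: BS.
rewrite /turnstile; apply: cm_sub.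
  by apply: cm_sym; apply: cm_P_elt EB.
by apply: cm_sum => S HS; apply: BS.
Qed.
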